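(* Let $K$ be the set of double cones of Minkowski spacetime $\mathbb M^4$ with symmetry group the Poincaré group $\mathscr P^\uparrow_+$. There exists $f\in\mathrm C^0(K,\mathcal D)^{\mathscr P^\uparrow_+}$ such that $f_a$ is nonzero and non-negative for every $a\in K$. Furthermore, the 1-cochain $\delta f$ belongs to $\mathrm C^1(K,\mathcal D)^{\mathscr P^\uparrow_+}$ and satisfies: (i) $(\delta f)^{ev}_b=f_{|b|}$ is nonzero and non-negative for every 1-simplex $b$; (ii) $(\delta f)^{odd}_b=f_{\partial_0b}-f_{\partial_1b}\neq0$ for every 1-simplex $b$ with $\partial_0b\ne\partial_1b$.
   Context: Double cones: sets $s(o_R)$ with $R>0$, $o_R=\{(t,\mathbf x)\in\mathbb R^4:|t|+|\mathbf x|<R\}$, and $s\in\mathscr P^\uparrow_+$ (proper orthochronous Poincaré group); $K$ is ordered by inclusion and $\mathscr P^\uparrow_+$ acts by $o\mapsto s(o)$. A 1-simplex is $b=(|b|;\partial_0b,\partial_1b)$ with $|b|,\partial_0b,\partial_1b\in K$, $\partial_0b,\partial_1b\subseteq|b|$; opposite $\overline b=(|b|;\partial_1b,\partial_0b)$; $s(b)=(s(|b|);s(\partial_0b),s(\partial_1b))$. $\mathcal D_a$: real smooth compactly supported functions on $\mathbb R^4$ vanishing outside the closure of $a$. $\mathrm C^0(K,\mathcal D)$: maps $a\mapsto f_a\in\mathcal D_a$; $\mathrm C^1(K,\mathcal D)$: maps $b\mapsto f_b\in\mathcal D_{|b|}$ on 1-simplices. $S$-action: $(sf)_x=f_{s(x)}\circ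 s$; $\mathrm C^n(K,\mathcal D)^{\mathscr P^\uparrow_+}$ denotes the fixed points. $(\delta f)_b:=f_{\partial_0b}-f_{\partial_1b}+f_{|b|}$ for $f\in\mathrm C^0(K,\mathcal D)$. For $g\in\mathrm C^1(K,\mathcal D)$: $g^{ev}_b=\tfrac12(g_b+g_{\overline b})$, $g^{odd}_b=\tfrac12(g_b-g_{\overline b})$. *)

(* Defs.v *)
From HB Require Import structures.
From mathcomp Require Import all_boot all_order all_algebra.
From mathcomp Require Import all_classical all_reals all_analysis.
Set Implicit Arguments. Unset Strict Implicit. Unset Printing Implicit Defensive.
Import Order.TTheory GRing.Theory Num.Theory.
Import numFieldNormedType.Exports.
Local Open Scope classical_set_scope.
Local Open Scope ring_scope.

Section Minkowski.
Variable R : realType.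

(* Minkowski spacetime M^4 : row vectors (t, x1, x2, x3), index 0 = time. *)
Definition pt := 'rV[R]_4.

Definition eta : 'M[R]_4 := diag_mx (\row_(i < 4) (if i == 0 then 1 else -1)).

Definition poincare (L : 'M[R]_4) (a : pt) : Prop :=
  L *m eta *m L^T = eta /\ \det L = 1 /\ 0 < L 0 0.

Definition pact (L : 'M[R]_4) (a : pt) (x : pt) : pt := x *m L + a.

Definition spatial_norm (x : pt) : R :=
  Num.sqrt (\sum_(i < 4 | i != 0) x 0 i ^+ 2).

Definition double_cone0 (r : R) : set pt :=
  [set x : pt | `|x 0 0| + spatial_norm x < r].

Definition isK (a : set pt) : Prop :=
  exists r : R, 0 < r /\
    exists L b, poincare L b /\ a = pact L b @` double_cone0 r.

Fixpoint smooth_n (n : nat) (f : pt -> R) : Prop :=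
  match n with
  | 0 => continuous f
  | n'.+1 => (forall x, differentiable f x) /\
             (forall v : pt, smooth_n n' ('D_v f))
  end.
Definition smooth (f : pt -> R) : Prop := forall n, smooth_n n f.

Definition testfun (a : set pt) (f : pt -> R) : Prop :=
  smooth f /\ compact (closure [set x : pt | f x != 0]) /\
  (forall x, ~ closure a x -> f x = 0).

Definition C0 (f : set pt -> pt -> R) : Prop :=
  forall a, isK a -> testfun a (f a).

Definition C0_inv (f : set pt -> pt -> R) : Prop :=
  forall L b, poincare L b -> forall a, isK a ->
    f (pact L b @` a) \o pact L b = f a.

(* 1-simplex b = (|b| ; d0 b, d1 b) given as (c ; d0, d1). *)
Definition simplex1 (c d0 d1 : set pt) : Prop :=
  [/\ isK c, isK d0, isK d1, d0 `<=` c & d1 `<=` c].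

Definition C1 (g : set pt -> set pt -> set pt -> pt -> R) : Prop :=
  forall c d0 d1, simplex1 c d0 d1 -> testfun c (g c d0 d1).

Definition C1_inv (g : set pt -> set pt -> set pt -> pt -> R) : Prop :=
  forall L b, poincare L b -> forall c d0 d1, simplex1 c d0 d1 ->
    g (pact L b @` c) (pact L b @` d0) (pact L b @` d1) \o pact L b
    = g c d0 d1.

Definition delta (f : set pt -> pt -> R) : set pt -> set pt -> set pt -> pt -> R :=
  fun c d0 d1 x => f d0 x - f d1 x + f c x.

Definition cev (g : set pt -> set pt -> set pt -> pt -> R) c d0 d1 : pt -> R :=
  fun x => (g c d0 d1 x + g c d1 d0 x) / 2.
Definition codd (g : set pt -> set pt -> set pt -> pt -> R) c d0 d1 : pt -> R :=
  fun x => (g c d0 d1 x - g c d1 d0 x) / 2.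

End Minkowski.

(* Main.v *)
Require Import Defs.
From HB Require Import structures.
From mathcomp Require Import all_boot all_order all_algebra.
From mathcomp Require Import all_classical all_reals all_analysis.
From mathcomp Require Import ring lra.
Import Order.TTheory GRing.Theory Num.Theory.
Import numFieldNormedType.Exports.
Local Open Scope classical_set_scope.
Local Open Scope ring_scope.

Section theta.
Variable R : realType.
Definition T (P : {poly R}) (s : R) : R := if 0 < s then P.[s^-1] * expR (- s^-1) else 0.

Lemma poly_bound (Q : {poly R}) y : 1 <= y ->
  `|Q.[y]| <= (\sum_(i < size Q) `|Q`_i|) * y ^+ size Q.
Proof.
move=> y1; rewrite horner_coef mulr_suml.
apply: (le_trans (ler_norm_sum _ _ _)); apply: ler_sum => i _.
rewrite normrM normrX (ger0_norm (le_trans ler01 y1)).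
apply: ler_wpM2l => //; exact: (ler_weXn2l y1 (ltnW (ltn_ord i))).
Qed.

Definition Cst (Q : {poly R}) := (\sum_(i < size Q) `|Q`_i|) * (size Q).+1`!%:R.

Lemma T_bound (Q : {poly R}) (x : R) : 0 < x <= 1 -> `|T Q x| <= Cst Q * x.
Proof.
case/andP=> x0 x1; rewrite /T x0.
have y1 : 1 <= x^-1 by rewrite invf_ge1.
have y0 : 0 < x^-1 by rewrite invr_gt0.
have M0 : 0 <= \sum_(i < size Q) `|Q`_i| by apply: sumr_ge0 => i _.
rewrite normrM (ger0_norm (expR_ge0 _)) expRN.
apply: (le_trans (ler_wpM2r _ (poly_bound Q _ y1))); first by rewrite invr_ge0 expR_ge0.
rewrite ler_pdivrMr ?expR_gt0 //.
have kp : 0 < ((size Q).+1)`!%:R :> R by rewrite ltr0n fact_gt0.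
have hexp := expR_ge1Dxn (size Q) (ltW y0).
have hge : x^-1 ^+ (size Q).+1 / ((size Q).+1)`!%:R <= expR x^-1.
  by apply: le_trans hexp; rewrite lerDr.
have Cx0 : 0 <= Cst Q * x by rewrite /Cst mulr_ge0 // ?mulr_ge0 // ltW.
apply: le_trans (ler_wpM2l Cx0 hge).
rewrite /Cst exprS.
have -> : (\sum_(i < size Q) `|Q`_i|) * ((size Q).+1)`!%:R * x *
   (x^-1 * x^-1 ^+ size Q / ((size Q).+1)`!%:R) =
   (\sum_(i < size Q) `|Q`_i|) * x^-1 ^+ size Q.
  by field; rewrite !lt0r_neq0.
by [].
Qed.

Lemma T_le0 (Q : {poly R}) (x : R) : x <= 0 -> T Q x = 0.
Proof. by move=> x0; rewrite /T ltNge x0. Qed.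

Lemma T_cvg0 (Q : {poly R}) : T Q x @[x --> (0:R)] --> 0.
Proof.
apply/cvgr0Pnorm_lt => e e0.
have C0 : 0 <= Cst Q by rewrite /Cst mulr_ge0 // sumr_ge0.
have d0 : 0 < Num.min 1 (e / (Cst Q + 1)).
  by rewrite lt_min ltr01 /= divr_gt0 // ltr_wpDl.
near=> x.
have hx : `|x| < Num.min 1 (e / (Cst Q + 1)).
  by near: x; exists (Num.min 1 (e / (Cst Q + 1))) => //= y; rewrite /ball_ /= sub0r normrN.
have [xle|xgt] := leP x 0; first by rewrite T_le0 // normr0.
move: hx; rewrite lt_min (gtr0_norm xgt) => /andP[x1 xe].
have hb : `|T Q x| <= Cst Q * x by apply: T_bound; rewrite xgt ltW.
apply: (le_lt_trans hb).
have : (Cst Q + 1) * x < e by rewrite mulrC -ltr_pdivlMr // ltr_wpDl.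
apply: le_lt_trans; rewrite ler_wpM2r ?ltW // ltrDl //.
Unshelve. all: by end_near. Qed.

Definition dP (Q : {poly R}) : {poly R} := (Q - Q^`()) * 'X^2.

Lemma T_derive (Q : {poly R}) (x : R) : is_derive x 1 (T Q) (T (dP Q) x).
Proof.
have [x0|x0|->] := ltgtP x 0.
- apply: (near_eq_is_derive (f := cst 0)); last first.
    by rewrite T_le0 ?ltW //; exact: is_derive_cst.
  by near=> y; rewrite T_le0 // ltW //; near: y; exact: lt_nbhsl.
- pose g := fun y : R => Q.[y^-1] * expR (- y^-1).
  apply: (near_eq_is_derive (f := g)).
    by near=> y; rewrite /T /g ifT //; near: y; exact: lt_nbhsr.
  have xn : x != 0 by rewrite gt_eqF.
  have Hi : is_derive x 1 (fun y : R => y^-1) (- x ^- 2 *: 1).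
    exact: (@is_deriveV R id x 1 1 xn).
  have H1 : is_derive x 1 (horner Q \o (fun y : R => y^-1))
     (Q^`().[x^-1] * (- x ^- 2 *: 1)) by exact: is_derive1_comp.
  have Hn : is_derive x 1 (fun y : R => - y^-1) (- (- x ^- 2 *: 1)).
    exact: is_deriveN.
  have H2 : is_derive x 1 (expR \o (fun y : R => - y^-1))
     (expR (- x^-1) * (- (- x ^- 2 *: 1))) by exact: is_derive1_comp.
  have H3 := is_deriveM H1 H2.
  apply: (is_derive_eq H3).
  rewrite /T x0 /dP /= !hornerE.
  by rewrite /GRing.scale /=; field.
- have Hq : (fun h : R => h^-1 *: ((T Q \o shift 0) (h *: 1) - T Q 0)) = T (Q * 'X).
    apply/funext => h /=; rewrite (T_le0 _ _ (lexx 0)) subr0 addr0 /GRing.scale /= mulr1.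
    rewrite /T; case: ifP => h0; last by rewrite mulr0.
    by rewrite hornerM hornerX; ring.
  have Hc : (fun h : R => h^-1 *: ((T Q \o shift 0) (h *: 1) - T Q 0)) @ 0^' --> 0.
    by rewrite Hq; apply: cvg_within_filter; exact: T_cvg0.
  rewrite (T_le0 _ _ (lexx 0)); apply: DeriveDef; first exact: cvgP Hc.
  by rewrite /derive; apply: cvg_lim.
Unshelve. all: by end_near.
Qed.
End theta.

Section smooth.
Variable R : realType.
Local Notation pt := (pt R).
Implicit Types f g : pt -> R.

Lemma smooth_down n f : smooth_n n.+1 f -> smooth_n n f.
Proof.
elim: n f => [|n IH] f /= [df Df].
  by move=> x; apply: differentiable_continuous.
by split=> // v; apply: IH; exact: Df.
Qed.

Lemma smooth_add n f g : smooth_n n f -> smooth_n n g -> smooth_n n (fun x => f x + g x).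
Proof.
elim: n f g => [|n IH] f g /=.
  by move=> cf cg x; exact: (@continuousD _ _ _ f g x (cf x) (cg x)).
move=> [df Df] [dg Dg]; split.
  by move=> x; exact: (differentiableD (df x) (dg x)).
move=> v.
have -> : 'D_v (fun x => f x + g x) = (fun x => 'D_v f x + 'D_v g x).
  apply/funext => x /=.
  by rewrite (deriveD (diff_derivable (v:=v) (df x)) (diff_derivable (v:=v) (dg x))).
exact: IH.
Qed.

Lemma smooth_mul n f g : smooth_n n f -> smooth_n n g -> smooth_n n (fun x => f x * g x).
Proof.
elim: n f g => [|n IH] f g /=.
  by move=> cf cg x; exact: (@continuousM _ _ f g x (cf x) (cg x)).
move=> [df Df] [dg Dg]; split.
  by move=> x; exact: (differentiableM (df x) (dg x)).
move=> v.
have -> : 'D_v (fun x => f x * g x) = (fun x => f x * 'D_v g x + g x * 'D_v f x).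
  apply/funext => x /=.
  by rewrite (deriveM (diff_derivable (v:=v) (df x)) (diff_derivable (v:=v) (dg x))).
apply: smooth_add; apply: IH => //; apply: smooth_down; by split.
Qed.

Lemma smooth_cst n (c : R) : smooth_n n (fun _ : pt => c).
Proof.
elim: n c => [|n IH] c /=; first by move=> x; exact: cst_continuous.
split; first by move=> x; exact: differentiable_cst.
move=> v; have -> : 'D_v (fun _ : pt => c) = (fun _ => 0).
  by apply/funext => x; exact: derive_cst.
exact: IH.
Qed.

Lemma smooth_coord n (i : 'I_4) : smooth_n n (fun x : pt => x 0 i).
Proof.
case: n => [|n] /=; first exact: coord_continuous.
split; first by move=> x; exact: differentiable_coord.
move=> v.
have @f : {linear pt -> R}.
  by exists (fun N : pt => N 0 i); do 2![eexists]; do ?[constructor];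
     rewrite ?mxE// => ? *; rewrite ?mxE//; move=> ?; rewrite !mxE.
have -> : 'D_v (fun x : pt => x 0 i) = (fun _ => v 0 i).
  apply/funext => x; rewrite deriveE; last exact: differentiable_coord.
  rewrite (_ : (fun x : pt => x 0 i) = f) // diff_lin //; exact: coord_continuous.
exact: smooth_cst.
Qed.

Lemma smooth_comp (F : pt -> R) : smooth F -> forall (n : nat) (D : nat -> R -> R),
  (forall (k : nat) (x : R), is_derive x (1:R) (D k) (D k.+1 x)) -> smooth_n n (fun x => D 0%N (F x)).
Proof.
move=> sF n; elim: n => [|n IH] D hD /=.
  move=> x; apply: continuous_comp; first exact: (sF 0%N).
  apply: differentiable_continuous; apply/derivable1_diffP.
  by case: (hD 0%N (F x)).
have dF : forall x, differentiable F x by move=> x; case: (sF 1%N).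
have dD : forall k y, differentiable (D k) y.
  by move=> k y; apply/derivable1_diffP; case: (hD k y).
split.
  by move=> x; exact: (differentiable_comp (dF x) (dD 0%N (F x))).
move=> v.
have -> : 'D_v (fun x => D 0%N (F x)) = (fun x => D 1%N (F x) * 'D_v F x).
  apply/funext => x /=.
  rewrite (deriveE v (differentiable_comp (dF x) (dD 0%N (F x)))).
  rewrite (diff_comp (dF x) (dD 0%N (F x))) /=.
  rewrite (diff1E (dD 0%N (F x))) -(deriveE v (dF x)).
  rewrite derive1E; case: (hD 0%N (F x)) => _ ->.
  by rewrite /GRing.scale /= mulrC.
apply: smooth_mul; first exact: (IH (fun k => D k.+1)).
by case: (sF n.+1) => _; apply.
Qed.
End smooth.

Section geom.
Variable R : realType.
Local Notation pt := (pt R).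

Definition o1 : 'I_4 := @Ordinal 4 1 isT.
Definition o2 : 'I_4 := @Ordinal 4 2 isT.
Definition o3 : 'I_4 := @Ordinal 4 3 isT.

Definition mink (u v : pt) : R :=
  u 0 0 * v 0 0 - u 0 o1 * v 0 o1 - u 0 o2 * v 0 o2 - u 0 o3 * v 0 o3.

Lemma minkE (u v : pt) : mink u v = (u *m @Defs.eta R *m v^T) 0 0.
Proof.
rewrite /mink /Defs.eta !mxE !big_ord_recl big_ord0 /= !mxE.
rewrite !big_ord_recl !big_ord0 /= !mxE /=.
have h3 : lift ord0 (lift ord0 (lift ord0 ord0)) = o3 :> 'I_4 by apply: val_inj.
have h2 : lift ord0 (lift ord0 ord0) = o2 :> 'I_4 by apply: val_inj.
have h1 : lift ord0 ord0 = o1 :> 'I_4 by apply: val_inj.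
have h0 : ord0 = 0 :> 'I_4 by [].
rewrite h3 h2 h1 h0; ring.
Qed.

Lemma mink_inv (L : 'M[R]_4) (u v : pt) : L *m @Defs.eta R *m L^T = @Defs.eta R ->
  mink (u *m L) (v *m L) = mink u v.
Proof.
move=> H; rewrite !minkE trmx_mul -!mulmxA; congr (_ 0 0); congr (u *m _).
by rewrite !mulmxA H.
Qed.

Lemma minkC u v : mink u v = mink v u.
Proof. by rewrite /mink; ring. Qed.
Lemma minkDl u v w : mink (u + v) w = mink u w + mink v w.
Proof. by rewrite /mink !mxE; ring. Qed.
Lemma minkNl u w : mink (- u) w = - mink u w.
Proof. by rewrite /mink !mxE; ring. Qed.
Lemma minkZl (c : R) u w : mink (c *: u) w = c * mink u w.
Proof. by rewrite /mink !mxE; ring. Qed.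
Lemma minkDr u v w : mink w (u + v) = mink w u + mink w v.
Proof. by rewrite minkC minkDl !(minkC w). Qed.
Lemma minkNr u w : mink w (- u) = - mink w u.
Proof. by rewrite minkC minkNl minkC. Qed.
Lemma minkZr (c : R) u w : mink w (c *: u) = c * mink w u.
Proof. by rewrite minkC minkZl minkC. Qed.

Definition fut (v : pt) := 0 < v 0 0 /\ 0 < mink v v.

Lemma CS3 (a1 a2 a3 b1 b2 b3 : R) :
  (a1*b1+a2*b2+a3*b3)^+2 <= (a1^+2+a2^+2+a3^+2)*(b1^+2+b2^+2+b3^+2).
Proof.
rewrite -subr_ge0.
have -> : (a1^+2+a2^+2+a3^+2)*(b1^+2+b2^+2+b3^+2) - (a1*b1+a2*b2+a3*b3)^+2 =
  (a1*b2-a2*b1)^+2 + (a1*b3-a3*b1)^+2 + (a2*b3-a3*b2)^+2 by ring.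
by rewrite !addr_ge0 ?sqr_ge0.
Qed.

Lemma revCS (a0 a1 a2 a3 b0 b1 b2 b3 : R) : 0 < a0 -> 0 < b0 ->
  a1^+2+a2^+2+a3^+2 < a0^+2 -> b1^+2+b2^+2+b3^+2 < b0^+2 ->
  a1*b1+a2*b2+a3*b3 < a0*b0.
Proof.
move=> a0p b0p ha hb.
have := CS3 a1 a2 a3 b1 b2 b3.
set sa := a1^+2+a2^+2+a3^+2; set sb := b1^+2+b2^+2+b3^+2; set d := a1*b1+a2*b2+a3*b3.
move=> hcs.
have sa0 : 0 <= sa by rewrite /sa !addr_ge0 ?sqr_ge0.
have sb0 : 0 <= sb by rewrite /sb !addr_ge0 ?sqr_ge0.
have h1 : sa * sb < a0^+2 * b0^+2.
  apply: (le_lt_trans (ler_wpM2l sa0 (ltW hb))).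
  by rewrite ltr_pM2r ?exprn_gt0.
have h2 : d^+2 < (a0*b0)^+2 by rewrite exprMn; exact: le_lt_trans hcs h1.
have ab0 : 0 < a0 * b0 by rewrite mulr_gt0.
have [dle|dgt] := leP d 0; first exact: le_lt_trans dle ab0.
by rewrite -(ltr_pXn2r (_ : (0 < 2)%N)) // ?nnegrE ?ltW.
Qed.

Lemma mink_sq (a : pt) : mink a a = a 0 0 ^+ 2 - (a 0 o1 ^+ 2 + a 0 o2 ^+ 2 + a 0 o3 ^+ 2).
Proof. by rewrite /mink; ring. Qed.

Lemma fut_mink a b : fut a -> fut b -> 0 < mink a b.
Proof.
move=> [a0 ha] [b0 hb]; move: ha hb; rewrite !mink_sq !subr_gt0 => ha hb.
have := @revCS _ _ _ _ _ _ _ _ a0 b0 ha hb.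
rewrite /mink -subr_gt0.
have -> : a 0 0 * b 0 0 - a 0 o1 * b 0 o1 - a 0 o2 * b 0 o2 - a 0 o3 * b 0 o3 = a 0 0 * b 0 0 -
   (a 0 o1 * b 0 o1 + a 0 o2 * b 0 o2 + a 0 o3 * b 0 o3) by ring.
by rewrite subr_gt0.
Qed.

Lemma time_neq0 a : 0 < mink a a -> a 0 0 != 0.
Proof.
rewrite mink_sq; apply: contraTneq => ->.
rewrite expr0n /= sub0r oppr_gt0 -leNgt.
by rewrite !addr_ge0 ?sqr_ge0.
Qed.

Lemma fut_add a b : fut a -> fut b -> fut (a + b).
Proof.
move=> [a0 ha] [b0 hb]; have hab := fut_mink a b (conj a0 ha) (conj b0 hb).
split; first by rewrite mxE addr_gt0.
rewrite minkDl !minkDr (minkC b a).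
lra.
Qed.

Lemma fut_scale (c : R) a : 0 < c -> fut a -> fut (c *: a).
Proof.
move=> c0 [a0 ha]; split; first by rewrite mxE mulr_gt0.
by rewrite minkZl minkZr !mulr_gt0.
Qed.

Definition cone (p q : pt) : set pt :=
  [set x | 0 < mink (x - p) (x - p) /\ 0 < mink (q - x) (q - x) /\ 0 < mink (x - p) (q - x)].

Lemma minkNN u v : mink (- u) (- v) = mink u v.
Proof. by rewrite minkNl minkNr opprK. Qed.

Lemma cone_sym p q : cone p q = cone q p.
Proof.
have E : forall a b y, cone a b y -> cone b a y.
  move=> a b y [h1 [h2 h3]]; split; last split.
  - by rewrite -(opprB b y) minkNN.
  - by rewrite -(opprB y a) minkNN.
  - by rewrite -(opprB b y) -(opprB y a) minkNN minkC.
by apply/seteqP; split => y; apply: E.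
Qed.

Lemma fut_neg (a : pt) : a 0 0 < 0 -> 0 < mink a a -> fut (- a).
Proof. by move=> a0 ha; split; rewrite ?minkNN // mxE oppr_gt0. Qed.

Lemma cone_fut (p q x : pt) : fut (q - p) -> cone p q x <-> fut (x - p) /\ fut (q - x).
Proof.
move=> [t0 _]; split; last first.
  by move=> [ha hb]; split; [case: ha|split; [case: hb|exact: fut_mink]].
move=> [ha [hb hab]].
have tq : (q - p) 0 0 = (x - p) 0 0 + (q - x) 0 0 by rewrite !mxE; ring.
have := time_neq0 _ ha; have := time_neq0 _ hb.
rewrite !neq_lt => /orP[b0|b0] /orP[a0|a0].
- by exfalso; lra.
- exfalso; have : 0 < mink (x - p) (- (q - x)).
    by apply: fut_mink; [split | apply: fut_neg].
  by rewrite minkNr oppr_gt0 ltNge ltW.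
- exfalso; have : 0 < mink (- (x - p)) (q - x).
    by apply: fut_mink; [apply: fut_neg | split].
  by rewrite minkNl oppr_gt0 ltNge ltW.
- by [].
Qed.
End geom.
Arguments mink {R} u v.
Arguments fut {R} v.
Arguments cone {R} p q.

Set Implicit Arguments. Unset Strict Implicit.
Section poinc.
Variable R : realType.
Local Notation pt := (pt R).

Lemma pact_sub (L : 'M[R]_4) (b x y : pt) : pact L b x - pact L b y = (x - y) *m L.
Proof. by rewrite /pact mulmxBl opprD addrACA subrr addr0. Qed.

Lemma poincare_unit (L : 'M[R]_4) (b : pt) : poincare L b -> L \in unitmx.
Proof. by move=> [_ [hd _]]; rewrite unitmxE hd unitr1. Qed.

Lemma pact_surj (L : 'M[R]_4) (b : pt) : L \in unitmx -> forall x, pact L b ((x - b) *m invmx L) = x.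
Proof. by move=> hL x; rewrite /pact mulmxKV // subrK. Qed.

Lemma cone_pact (L : 'M[R]_4) (b p q : pt) : poincare L b ->
  pact L b @` cone p q = cone (pact L b p) (pact L b q).
Proof.
move=> hP; have hL := poincare_unit hP; have [he _] := hP.
have key : forall z, cone p q z <-> cone (pact L b p) (pact L b q) (pact L b z).
  move=> z; rewrite /cone /= !pact_sub !mink_inv //.
apply/seteqP; split => x.
  by move=> [z hz <-]; apply/key.
move=> hx; exists ((x - b) *m invmx L); last exact: pact_surj.
by apply/key; rewrite pact_surj.
Qed.

Lemma ord4_cases (j : 'I_4) : j = 0 \/ j = o1 \/ j = o2 \/ j = o3.
Proof.
case: j => [[|[|[|[|k]]]] Hk].
- by left; apply: val_inj.
- by right; left; apply: val_inj.
- by right; right; left; apply: val_inj.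
- by right; right; right; apply: val_inj.
- by [].
Qed.

Lemma pt_eq (u v : pt) : u 0 0 = v 0 0 -> u 0 o1 = v 0 o1 -> u 0 o2 = v 0 o2 ->
  u 0 o3 = v 0 o3 -> u = v.
Proof.
move=> h0 h1 h2 h3; apply/matrixP => i j; rewrite [i]ord1.
by case: (ord4_cases j) => [->|[->|[->|->]]].
Qed.

Lemma spatial_sum (x : pt) :
  \sum_(i < 4 | i != 0) x 0 i ^+ 2 = x 0 o1 ^+ 2 + x 0 o2 ^+ 2 + x 0 o3 ^+ 2.
Proof.
rewrite big_mkcond !big_ord_recl big_ord0 /=.
have h3 : lift ord0 (lift ord0 (lift ord0 ord0)) = o3 :> 'I_4 by apply: val_inj.
have h2 : lift ord0 (lift ord0 ord0) = o2 :> 'I_4 by apply: val_inj.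
have h1 : lift ord0 ord0 = o1 :> 'I_4 by apply: val_inj.
by rewrite h3 h2 h1 /=; ring.
Qed.

Definition p0 (r : R) : pt := \row_j (if j == 0 then - r else 0).
Definition q0 (r : R) : pt := \row_j (if j == 0 then r else 0).

Lemma dc_aux (x0 n r : R) : 0 < r -> 0 <= n ->
  (`|x0| + n < r) <-> (0 < (x0 + r)^+2 - n^+2 /\ 0 < (r - x0)^+2 - n^+2 /\ 0 < (x0 + r) * (r - x0) + n^+2).
Proof.
move=> r0 n0; split; last first.
  move=> [h1 [h2 h3]].
  have eB : (r - x0)^+2 - n^+2 + ((x0 + r) * (r - x0) + n^+2) = (2 * r) * (r - x0) by ring.
  have eA : (x0 + r)^+2 - n^+2 + ((x0 + r) * (r - x0) + n^+2) = (2 * r) * (x0 + r) by ring.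
  have r2 : 0 < 2 * r by lra.
  have p1 : 0 < r - x0.
    have : 0 < (2 * r) * (r - x0) by rewrite -eB; apply: addr_gt0.
    by rewrite pmulr_rgt0.
  have p2 : 0 < x0 + r.
    have : 0 < (2 * r) * (x0 + r) by rewrite -eA; apply: addr_gt0.
    by rewrite pmulr_rgt0.
  have e1 : (x0 + r)^+2 - n^+2 = (x0 + r - n) * (x0 + r + n) by ring.
  have e2 : (r - x0)^+2 - n^+2 = (r - x0 - n) * (r - x0 + n) by ring.
  have q1 : 0 < x0 + r - n.
    have hpos : 0 < x0 + r + n by lra.
    by move: h1; rewrite e1 pmulr_lgt0.
  have q2 : 0 < r - x0 - n.
    have hpos : 0 < r - x0 + n by lra.
    by move: h2; rewrite e2 pmulr_lgt0.
  have [x0p|x0n] := leP 0 x0; [rewrite ger0_norm|rewrite ltr0_norm]; lra.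
move=> h; have h1 : 0 < x0 + r - n.
  by have := ler_norm (- x0); rewrite normrN; lra.
have h2 : 0 < r - x0 - n by have := ler_norm x0; lra.
have e1 : (x0 + r)^+2 - n^+2 = (x0 + r - n) * (x0 + r + n) by ring.
have e2 : (r - x0)^+2 - n^+2 = (r - x0 - n) * (r - x0 + n) by ring.
rewrite e1 e2; split; [|split]; [apply: mulr_gt0; lra|apply: mulr_gt0; lra|].
have : 0 < (x0 + r) * (r - x0) by apply: mulr_gt0; lra.
have : 0 <= n ^+ 2 by rewrite sqr_ge0.
lra.
Qed.

Lemma dc_cone (r : R) : 0 < r -> double_cone0 r = cone (p0 r) (q0 r).
Proof.
move=> r0; apply/seteqP; split => x; rewrite /double_cone0 /spatial_norm /= spatial_sum;
  set S := x 0 o1 ^+ 2 + x 0 o2 ^+ 2 + x 0 o3 ^+ 2;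
  have S0 : 0 <= S by rewrite /S !addr_ge0 ?sqr_ge0.
all: have hn := sqr_sqrtr S0.
all: have n0 : 0 <= Num.sqrt S by rewrite sqrtr_ge0.
all: have E1 : mink (x - p0 r) (x - p0 r) = (x 0 0 + r)^+2 - Num.sqrt S ^+ 2
        by rewrite hn /mink /S !mxE /=; ring.
all: have E2 : mink (q0 r - x) (q0 r - x) = (r - x 0 0)^+2 - Num.sqrt S ^+ 2
        by rewrite hn /mink /S !mxE /=; ring.
all: have E3 : mink (x - p0 r) (q0 r - x) = (x 0 0 + r) * (r - x 0 0) + Num.sqrt S ^+ 2
        by rewrite hn /mink /S !mxE /=; ring.
all: rewrite /cone /= E1 E2 E3.
  by move/(dc_aux _ r0 n0).
by move/(dc_aux _ r0 n0).
Qed.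

Lemma K_cone (a : set pt) : isK a -> exists p q, fut (q - p) /\ a = cone p q.
Proof.
move=> [r [r0 [L [b [hP ->]]]]].
rewrite dc_cone // cone_pact //.
set P := pact L b (p0 r); set Q := pact L b (q0 r).
have hm : 0 < mink (Q - P) (Q - P).
  rewrite /P /Q pact_sub mink_inv; last by case: hP.
  rewrite /mink !mxE /=; nra.
have := time_neq0 _ _ hm; rewrite neq_lt => /orP[t0|t0].
  exists Q, P; split; last exact: cone_sym.
  by rewrite -opprB; apply: fut_neg.
by exists P, Q.
Qed.
End poinc.

Set Implicit Arguments. Unset Strict Implicit.
Section clos.
Variable R : realType.
Local Notation pt := (pt R).

Lemma closure_path (A : set pt) (z d : pt) :
  (forall t : R, 0 < t < 1 -> A (z + t *: d)) -> closure A z.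
Proof.
move=> hA B hB.
pose g := fun t : R => z + t *: d.
have gc : {for 0, continuous g}.
  apply: continuousD; first exact: cst_continuous.
  exact: scalel_continuous.
have hB' : nbhs (0:R) (g @^-1` B).
  by apply: gc; rewrite /g scale0r addr0.
have H : \forall t \near (0:R)^'+, (0 < t /\ t < 1) /\ B (g t).
  near=> t; split; [split|].
  - near: t; exact: nbhs_right_gt.
  - near: t; apply: (cvg_within _); exact: (lt_nbhsl ltr01).
  - near: t; exact: (cvg_within _ hB').
have [t [[t0 t1] Bt]] := filter_ex H.
by exists (g t); split => //; apply: hA; rewrite t0 t1.
Unshelve. all: by end_near.
Qed.

Lemma smooth_sub n (f g : pt -> R) : smooth_n n f -> smooth_n n g -> smooth_n n (fun x => f x - g x).
Proof.
move=> hf hg.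
have -> : (fun x => f x - g x) = (fun x => f x + (-1) * g x).
  by apply/funext => x; rewrite mulN1r.
by apply: smooth_add => //; apply: smooth_mul => //; exact: smooth_cst.
Qed.

Lemma smooth_lin n (u : R) (c : pt) (i : 'I_4) : smooth_n n (fun x : pt => (u *: x + c) 0 i).
Proof.
have -> : (fun x : pt => (u *: x + c) 0 i) = (fun x => u * x 0 i + c 0 i).
  by apply/funext => x; rewrite !mxE.
apply: smooth_add; last exact: smooth_cst.
by apply: smooth_mul; [exact: smooth_cst|exact: smooth_coord].
Qed.

Lemma smooth_mink n (u v : R) (c d : pt) :
  smooth_n n (fun x : pt => mink (u *: x + c) (v *: x + d)).
Proof.
rewrite /mink.
by repeat apply: smooth_sub; apply: smooth_mul; exact: smooth_lin.
Qed.

Lemma cont_lin (u : R) (c : pt) (i : 'I_4) : continuous (fun x : pt => (u *: x + c) 0 i).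
Proof. exact: (@smooth_lin 0%N). Qed.

Lemma cont_mink (u v : R) (c d : pt) : continuous (fun x : pt => mink (u *: x + c) (v *: x + d)).
Proof. exact: (@smooth_mink 0%N). Qed.

Definition Jc (u : R) (c : pt) : set pt :=
  [set x | 0 <= (u *: x + c) 0 0 /\ 0 <= mink (u *: x + c) (u *: x + c)].

Lemma Jc_closed u c : closed (Jc u c).
Proof.
have -> : Jc u c = (fun x : pt => (u *: x + c) 0 0) @^-1` [set y | 0 <= y] `&`
   (fun x : pt => mink (u *: x + c) (u *: x + c)) @^-1` [set y | 0 <= y] by [].
apply: closedI; apply: preimage_closed; (try exact: closed_ge).
  by move=> x _; exact: cont_lin.
by move=> x _; exact: cont_mink.
Qed.

Lemma null_eq (w : pt) : 0 <= w 0 0 -> w 0 0 <= 0 -> 0 <= mink w w -> w = 0.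
Proof.
move=> h1 h2; rewrite mink_sq => h3.
have e0 : w 0 0 = 0 by apply/eqP; rewrite eq_le h2 h1.
move: h3; rewrite e0 expr0n /= sub0r oppr_ge0 => h3.
have s1 := sqr_ge0 (w 0 o1); have s2 := sqr_ge0 (w 0 o2); have s3 := sqr_ge0 (w 0 o3).
have z1 : w 0 o1 ^+ 2 = 0 by lra.
have z2 : w 0 o2 ^+ 2 = 0 by lra.
have z3 : w 0 o3 ^+ 2 = 0 by lra.
apply: pt_eq; rewrite ?mxE //.
- by apply/eqP; rewrite -sqrf_eq0 z1.
- by apply/eqP; rewrite -sqrf_eq0 z2.
- by apply/eqP; rewrite -sqrf_eq0 z3.
Qed.

Lemma seg_in_cone (p q : pt) (t : R) : fut (q - p) -> 0 < t < 1 -> cone p q (p + t *: (q - p)).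
Proof.
move=> hf /andP[t0 t1]; apply/cone_fut => //; split.
  by rewrite addrAC subrr add0r; apply: fut_scale.
have -> : q - (p + t *: (q - p)) = (1 - t) *: (q - p).
  by apply/matrixP => i j; rewrite !mxE; ring.
by apply: fut_scale => //; rewrite subr_gt0.
Qed.

Lemma tipp_closure (p q : pt) : fut (q - p) -> closure (cone p q) p.
Proof. by move=> hf; apply: closure_path => t ht; exact: seg_in_cone. Qed.

Lemma tipq_closure (p q : pt) : fut (q - p) -> closure (cone p q) q.
Proof.
move=> hf; apply: (@closure_path _ q (p - q)) => t /andP[t0 t1].
have -> : q + t *: (p - q) = p + (1 - t) *: (q - p).
  by apply/matrixP => i j; rewrite !mxE; ring.
by apply: seg_in_cone => //; rewrite subr_gt0 t1 ltrBlDr ltrDl.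
Qed.

Lemma closure_cone_p (p q : pt) : fut (q - p) -> closure (cone p q) `<=` Jc 1 (- p).
Proof.
move=> hf; have -> : Jc 1 (- p) = closure (Jc 1 (- p)) by apply/closure_id; exact: Jc_closed.
apply: closureS => x /((cone_fut _ _ _ _ hf).1) [[h1 h2] _].
by rewrite /Jc /= scale1r; split; apply: ltW.
Qed.

Lemma closure_cone_q (p q : pt) : fut (q - p) -> closure (cone p q) `<=` Jc (-1) q.
Proof.
move=> hf; have -> : Jc (-1) q = closure (Jc (-1) q) by apply/closure_id; exact: Jc_closed.
apply: closureS => x /((cone_fut _ _ _ _ hf).1) [_ [h1 h2]].
by rewrite /Jc /= scaleN1r addrC; split; apply: ltW.
Qed.

Lemma tips_unique (p q p2 q2 : pt) : fut (q - p) -> fut (q2 - p2) ->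
  cone p q = cone p2 q2 -> p = p2 /\ q = q2.
Proof.
move=> hf hf2 E; split.
  have h1 : Jc 1 (- p) p2 by apply: (closure_cone_p hf); rewrite E; exact: tipp_closure.
  have h2 : Jc 1 (- p2) p by apply: (closure_cone_p hf2); rewrite -E; exact: tipp_closure.
  move: h1 h2; rewrite /Jc /= !scale1r => [[a1 a2] [b1 b2]].
  have : p2 - p = 0.
    apply: null_eq => //.
    by move: b1; rewrite !mxE; lra.
  by move/eqP; rewrite subr_eq0 => /eqP.
have h1 : Jc (-1) q q2 by apply: (closure_cone_q hf); rewrite E; exact: tipq_closure.
have h2 : Jc (-1) q2 q by apply: (closure_cone_q hf2); rewrite -E; exact: tipq_closure.
move: h1 h2; rewrite /Jc /= !scaleN1r => [[a1 a2] [b1 b2]].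
have : - q2 + q = 0.
  apply: null_eq => //.
  by move: b1; rewrite !mxE; lra.
by move/eqP; rewrite addrC subr_eq0 => /eqP.
Qed.
End clos.

Set Implicit Arguments. Unset Strict Implicit.
Section main.
Variable R : realType.
Local Notation pt := (pt R).

Definition theta (s : R) : R := @T R 1 s.
Definition Dseq (k : nat) : R -> R := @T R (iter k (@dP R) 1).

Lemma Dseq_der (k : nat) (x : R) : is_derive x (1:R) (Dseq k) (Dseq k.+1 x).
Proof. exact: T_derive. Qed.

Lemma theta_ge0 s : 0 <= theta s.
Proof. by rewrite /theta /T; case: ifP => // _; rewrite hornerC mul1r expR_ge0. Qed.

Lemma theta_ne0 s : theta s != 0 <-> 0 < s.
Proof.
rewrite /theta /T; case: ifP => h; last by rewrite eqxx.
by rewrite hornerC mul1r expR_eq0.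
Qed.

Definition pp (p q : pt) : pt := (3/4) *: p + (1/4) *: q.

Definition F (p q : pt) (x : pt) : R :=
  theta (mink (x - pp p q) (x - pp p q)) * theta (mink (pp q p - x) (pp q p - x)) *
  theta (mink (x - pp p q) (pp q p - x)).

Lemma F_ge0 p q x : 0 <= F p q x.
Proof. by rewrite /F !mulr_ge0 ?theta_ge0. Qed.

Lemma F_ne0 p q x : F p q x != 0 <-> cone (pp p q) (pp q p) x.
Proof.
rewrite /F !mulf_eq0 !negb_or; split.
  by case/andP => /andP[/theta_ne0 ? /theta_ne0 ?] /theta_ne0 ?.
by move=> [/theta_ne0 -> [/theta_ne0 -> /theta_ne0 ->]].
Qed.

Lemma F_sym p q : F p q = F q p.
Proof.
apply/funext => x; rewrite /F.
rewrite -(opprB x (pp q p)) -(opprB (pp p q) x) !minkNN.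
rewrite (minkC _ (pp p q - x) (x - pp q p)); congr (_ * _); exact: mulrC.
Qed.

Lemma pp_pact (L : 'M[R]_4) b p q : pp (pact L b p) (pact L b q) = pact L b (pp p q).
Proof.
rewrite /pp /pact mulmxDl -!scalemxAl.
set P := p *m L; set Q := q *m L.
by apply/matrixP => i j; rewrite !mxE; field.
Qed.

Lemma F_pact (L : 'M[R]_4) b p q : poincare L b -> F (pact L b p) (pact L b q) \o pact L b = F p q.
Proof.
move=> [he _]; apply/funext => x /=.
by rewrite /F !pp_pact !pact_sub !mink_inv.
Qed.

Lemma F_smooth p q : smooth (F p q).
Proof.
move=> n.
have sm : forall (u v : R) (c d : pt), smooth (fun x : pt => mink (u *: x + c) (v *: x + d)).
  by move=> u v c d m; exact: smooth_mink.
have -> : F p q = (fun x => Dseq 0 (mink (1 *: x + - pp p q) (1 *: x + - pp p q)) *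
                           Dseq 0 (mink ((-1) *: x + pp q p) ((-1) *: x + pp q p)) *
                           Dseq 0 (mink (1 *: x + - pp p q) ((-1) *: x + pp q p))).
  by apply/funext => x; rewrite /F scale1r scaleN1r (addrC (- x)).
apply: smooth_mul; first apply: smooth_mul.
all: apply: (smooth_comp _ _ (sm _ _ _ _)); exact: Dseq_der.
Qed.

Definition tipsP (a : set pt) (pq : pt * pt) := fut (pq.2 - pq.1) /\ a = cone pq.1 pq.2.

Definition f (a : set pt) : pt -> R :=
  match pselect (exists pq, tipsP a pq) with
  | left H => F (projT1 (cid H)).1 (projT1 (cid H)).2
  | right _ => fun _ => 0
  end.

Lemma f_eq (a : set pt) (p q : pt) : fut (q - p) -> a = cone p q -> f a = F p q.
Proof.
move=> hf ha; rewrite /f; case: pselect => [H|nH]; last first.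
  by exfalso; apply: nH; exists (p, q).
case: (cid H) => [[p2 q2] [h1 h2]] /=; rewrite /= in h1 h2.
by have [-> ->] := tips_unique h1 hf (etrans (esym h2) ha).
Qed.

Lemma f_pact (L : 'M[R]_4) b (a : set pt) : poincare L b -> isK a ->
  f (pact L b @` a) \o pact L b = f a.
Proof.
move=> hP /K_cone [p [q [hf ->]]].
rewrite cone_pact // (f_eq hf (erefl (cone p q))).
have [he _] := hP.
have hm : 0 < mink (pact L b q - pact L b p) (pact L b q - pact L b p).
  by rewrite pact_sub mink_inv //; case: hf => _; rewrite -[q - p]/(q - p).
have := time_neq0 _ _ hm; rewrite neq_lt => /orP[t0|t0].
  have hf2 : fut (pact L b p - pact L b q) by rewrite -opprB; apply: fut_neg.
  rewrite cone_sym (f_eq hf2 (erefl _)) F_sym; exact: F_pact.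
by rewrite (f_eq (conj t0 hm) (erefl _)); exact: F_pact.
Qed.

Lemma pp_fut (p q : pt) : fut (q - p) -> fut (pp q p - pp p q).
Proof.
move=> hf; have -> : pp q p - pp p q = (1/2) *: (q - p).
  by apply/matrixP => i j; rewrite !mxE; field.
by apply: fut_scale.
Qed.

Lemma cone_sub (p q : pt) : fut (q - p) -> cone (pp p q) (pp q p) `<=` cone p q.
Proof.
move=> hf x /(cone_fut _ _ _ _ (pp_fut hf)) [h1 h2]; apply/cone_fut => //.
have hq : fut ((1/4) *: (q - p)) by apply: fut_scale.
split.
  have -> : x - p = (x - pp p q) + (1/4) *: (q - p).
    by apply/matrixP => i j; rewrite !mxE; field.
  exact: fut_add.
have -> : q - x = (1/4) *: (q - p) + (pp q p - x).
  by apply/matrixP => i j; rewrite !mxE; field.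
exact: fut_add.
Qed.

Definition box (p q : pt) : set pt :=
  [set v : pt | forall i, `[p 0 i - (q - p) 0 0, p 0 i + (q - p) 0 0]%classic (v ord0 i)].

Lemma box_compact p q : compact (box p q).
Proof.
by apply: (@rV_compact _ _ (fun i => `[p 0 i - (q - p) 0 0, p 0 i + (q - p) 0 0]%classic)) => i; exact: segment_compact.
Qed.

Lemma sq_lt (y a : R) : 0 < a -> y ^+ 2 < a ^+ 2 -> - a <= y <= a.
Proof. by move=> a0 h; apply/andP; split; nra. Qed.

Lemma cone_box (p q : pt) : fut (q - p) -> cone p q `<=` box p q.
Proof.
move=> hf x /(cone_fut _ _ _ _ hf) [[a0 ha] [b0 hb]] i.
rewrite /= in_itv /=.
have ed : (q - p) 0 0 = (x - p) 0 0 + (q - x) 0 0 by rewrite !mxE; ring.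
have ex : x 0 i = p 0 i + (x - p) 0 i by rewrite !mxE; ring.
rewrite [x ord0 i]ex ed lerD2l lerD2l.
move: ha; rewrite mink_sq subr_gt0 => ha.
have s1 := sqr_ge0 ((x - p) 0 o1); have s2 := sqr_ge0 ((x - p) 0 o2).
have s3 := sqr_ge0 ((x - p) 0 o3).
case: (ord4_cases i) => [->|[->|[->|->]]].
- by apply/andP; split; lra.
- have := @sq_lt ((x - p) 0 o1) _ a0; move/(_ ltac:(lra)) => /andP[? ?].
  by apply/andP; split; lra.
- have := @sq_lt ((x - p) 0 o2) _ a0; move/(_ ltac:(lra)) => /andP[? ?].
  by apply/andP; split; lra.
- have := @sq_lt ((x - p) 0 o3) _ a0; move/(_ ltac:(lra)) => /andP[? ?].
  by apply/andP; split; lra.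
Qed.

Lemma F_set (p q : pt) : [set x | F p q x != 0] = cone (pp p q) (pp q p).
Proof. by apply/seteqP; split => x /F_ne0. Qed.

Lemma F_testfun (p q : pt) : fut (q - p) -> testfun (cone p q) (F p q).
Proof.
move=> hf; split; first exact: F_smooth.
split.
  rewrite F_set.
  have hb := @box_compact (pp p q) (pp q p).
  apply: (subclosed_compact _ hb).
    exact: closed_closure.
  move=> x hx. have hcl := compact_closed _ hb. have hh : hausdorff_space pt := @norm_hausdorff _ _.
  exact: (hcl hh x (closureS (cone_box (pp_fut hf)) hx)).
move=> x hx; apply/eqP; apply/negPn/negP => hne; apply: hx.
by apply: subset_closure; apply: (cone_sub hf); apply/F_ne0.
Qed.
End main.

Set Implicit Arguments. Unset Strict Implicit.
Section fin.
Variable R : realType.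
Local Notation pt := (pt R).

Lemma F_nz (p q : pt) : fut (q - p) -> F p q <> (fun _ => 0).
Proof.
move=> hf E.
have hc : cone (pp p q) (pp q p) ((1/2) *: (p + q)).
  apply/(cone_fut _ _ _ _ (pp_fut hf)).
  have hq : fut ((1/4) *: (q - p)) by apply: fut_scale.
  split.
    have -> : (1/2) *: (p + q) - pp p q = (1/4) *: (q - p).
      by apply/matrixP => i j; rewrite !mxE; field.
    exact: hq.
  have -> : pp q p - (1/2) *: (p + q) = (1/4) *: (q - p).
    by apply/matrixP => i j; rewrite !mxE; field.
  exact: hq.
by move/F_ne0: hc; rewrite E eqxx.
Qed.

Lemma F_inj (p q p2 q2 : pt) : fut (q - p) -> fut (q2 - p2) -> F p q = F p2 q2 ->
  cone p q = cone p2 q2.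
Proof.
move=> hf hf2 E.
have Ec : cone (pp p q) (pp q p) = cone (pp p2 q2) (pp q2 p2).
  by rewrite -!F_set E.
have [e1 e2] := tips_unique (pp_fut hf) (pp_fut hf2) Ec.
have -> : p = p2.
  apply/matrixP => i j; have := congr1 (fun M : pt => M i j) e1.
  have := congr1 (fun M : pt => M i j) e2; rewrite /pp !mxE; lra.
have -> // : q = q2.
apply/matrixP => i j; have := congr1 (fun M : pt => M i j) e1.
have := congr1 (fun M : pt => M i j) e2; rewrite /pp !mxE; lra.
Qed.

Lemma testfun_sub (A B : set pt) (g : pt -> R) : A `<=` B -> testfun A g -> testfun B g.
Proof.
move=> AB [sg [cg vg]]; split => //; split => // x hx; apply: vg => hA; apply: hx.
exact: (closureS AB).
Qed.

Lemma testfun_add (A : set pt) (g h : pt -> R) : testfun A g -> testfun A h ->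
  testfun A (fun x => g x + h x).
Proof.
move=> [sg [cg vg]] [sh [ch vh]]; split.
  by move=> n; apply: smooth_add.
split; last by move=> x hx; rewrite vg // vh // addr0.
have hU := compactU cg ch.
have hh : hausdorff_space pt := @norm_hausdorff _ _.
have hcl := compact_closed hh hU.
apply: (subclosed_compact _ hU); first exact: closed_closure.
move=> x hx; apply: hcl; move: x hx; apply: closureS => x /= hx.
case: (eqVneq (g x) 0) => [g0|g0]; last by left; apply: subset_closure.
by right; apply: subset_closure; move: hx; rewrite g0 add0r.
Qed.

Lemma testfun_opp (A : set pt) (g : pt -> R) : testfun A g -> testfun A (fun x => - g x).
Proof.
move=> [sg [cg vg]]; split.
  move=> n; have -> : (fun x => - g x) = (fun x => (-1) * g x).
    by apply/funext => x; rewrite mulN1r.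
  by apply: smooth_mul => //; exact: smooth_cst.
split; last by move=> x hx; rewrite vg // oppr0.
have -> : [set x | - g x != 0] = [set x | g x != 0].
  by apply/seteqP; split => x /=; rewrite oppr_eq0.
exact: cg.
Qed.
End fin.

Lemma f_props {R : realType} {a : set (pt R)} : isK a ->
  testfun a (f a) /\ f a <> (fun _ => 0) /\ (forall x, 0 <= f a x).
Proof.
move=> /K_cone [p [q [hf ->]]]; rewrite (f_eq hf (erefl (cone p q))).
split; first exact: F_testfun.
by split; [exact: F_nz|exact: F_ge0].
Qed.

Unset Implicit Arguments.
Theorem proposition4p12 (R : realType) :
  exists f : set (pt R) -> pt R -> R,
    C0 f /\ C0_inv f /\
    (forall a, isK a -> f a <> (fun _ => 0) /\ (forall x, 0 <= f a x)) /\
    C1 (delta f) /\ C1_inv (delta f) /\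
    (forall c d0 d1, simplex1 c d0 d1 ->
       cev (delta f) c d0 d1 = f c /\
       f c <> (fun _ => 0) /\ (forall x, 0 <= f c x)) /\
    (forall c d0 d1, simplex1 c d0 d1 -> d0 <> d1 ->
       codd (delta f) c d0 d1 = (fun x => f d0 x - f d1 x) /\
       (fun x => f d0 x - f d1 x) <> (fun _ => 0)).
Proof.
exists (@f R).
split; first by move=> a ha; case: (f_props ha).
split; first by move=> L b hP a ha; exact: f_pact.
split; first by move=> a ha; case: (f_props ha).
split.
  move=> c d0 d1 [hc h0 h1 s0 s1]; rewrite /delta.
  apply: testfun_add; last by case: (f_props hc).
  apply: testfun_add.
    by apply: (testfun_sub s0); case: (f_props h0).
  by apply: testfun_opp; apply: (testfun_sub s1); case: (f_props h1).
split.
  move=> L b hP c d0 d1 [hc h0 h1 s0 s1]; apply/funext => x; rewrite /delta /=.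
  have e0 := congr1 (fun g => g x) (f_pact hP h0).
  have e1 := congr1 (fun g => g x) (f_pact hP h1).
  have e2 := congr1 (fun g => g x) (f_pact hP hc).
  by rewrite /= in e0 e1 e2; rewrite e0 e1 e2.
split.
  move=> c d0 d1 [hc h0 h1 s0 s1]; split; last by case: (f_props hc) => _.
  by apply/funext => x; rewrite /cev /delta; field.
move=> c d0 d1 [hc h0 h1 s0 s1] hne; split.
  by apply/funext => x; rewrite /codd /delta; field.
move=> E; apply: hne.
have Ef : f d0 = f d1.
  apply/funext => x; have := congr1 (fun g => g x) E => /= /eqP.
  by rewrite subr_eq0 => /eqP.
move: Ef; have [p [q [hf ->]]] := K_cone h0; have [p2 [q2 [hf2 ->]]] := K_cone h1.
rewrite (f_eq hf (erefl (cone p q))) (f_eq hf2 (erefl (cone p2 q2))).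
exact: F_inj.
Qed.
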